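(* Let $A=(n_A)_{n\ge0}$ be a cobweb tiling sequence with $0_A=1$, and let $s\ge0$ be an integer. Define the shifted sequence $B=\oplus_sA=(n_B)_{n\ge0}$ by $n_B=1$ for $n<s$ and $n_B=(n-s)_A$ for $n\ge s$. Then $B$ is also a cobweb tiling sequence.
   Context: Notation: $n_F\equiv F_n$. A sequence $F=(n_F)_{n\ge0}$ of natural numbers with $0_F=1$ is cobweb-admissible iff every $F$-nomial coefficient $\binom{n}{k}_F=\frac{n_F(n-1)_F\cdots(n-k+1)_F}{1_F2_F\cdots k_F}$, $0\le k\le n$, is a nonnegative integer. The cobweb poset of $F$ has, for each $s\ge1$, a level $\Phi_s$ consisting of $s_F$ distinct vertices (levels pairwise disjoint), plus a root level $\Phi_0$ with one vertex; for $x\in\Phi_i$, $y\in\Phi_j$ one has $x<y$ iff $i<j$. For $1\le a\le b$, the layer $\langle\Phi_a\to\Phi_b\rangle$ is the subposet on $\Phi_a\cup\dots\cup\Phi_b$; it has $m=b-a+1$ levels and its maximal chains form the set $\Phi_a\times\dots\times\Phi_b$. For a permutation $\sigma$ of $\{1,\dots,m\}$, a block of type $\sigma P_m$ in this layer is the subposet induced on $V_a\cup\dots\cup V_b$ where $V_{a-1+i}\subseteq\Phi_{a-1+i}$ and $|V_{a-1+i}|=\sigma(i)_F$ for $i=1,\dots,m$; its maximal chains form the set $V_a\times\dots\times V_b$. A tiling of the layer is a finite family of such blocks ($\sigma$ may vary from block to block) whose sets $V_a\times\dots\times V_b$ partition $\Phi_a\times\dots\times\Phi_b$ (pairwise max-disjoint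 and covering all maximal chains). A cobweb tiling sequence is a cobweb-admissible sequence $F$ such that for all $1\le a\le b$ the layer $\langle\Phi_a\to\Phi_b\rangle$ admits a tiling by blocks of type $\sigma P_{b-a+1}$. *)

(* Defs.v *)
From mathcomp Require Import all_boot all_fingroup.
Set Implicit Arguments. Unset Strict Implicit. Unset Printing Implicit Defensive.

Definition fnom_num (F : nat -> nat) (n k : nat) : nat := \prod_(i < k) F (n - i).
Definition fnom_den (F : nat -> nat) (k : nat) : nat := \prod_(i < k) F i.+1.

(* cobweb-admissible: 0_F = 1 and every F-nomial (0 <= k <= n) is a
   (well-defined) nonnegative integer: nonzero denominator dividing the numerator *)
Definition cobweb_admissible (F : nat -> nat) : Prop :=
  F 0 = 1 /\
  forall n k, k <= n -> 0 < fnom_den F k /\ fnom_den F k %| fnom_num F n k.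

(* Layer <Phi_a -> Phi_(a+m-1)>: level a+i (i < m) has vertex set 'I_(F (a+i)).
   A maximal chain picks one vertex in each level. *)
Definition chain (F : nat -> nat) (a m : nat) := forall i : 'I_m, 'I_(F (a + i)).

(* A block of type sigma P_m: sigma a permutation of {1..m} (encoded as 'S_m, value
   sigma i + 1), and a vertex subset V_(a+i) of each level. *)
Record block (F : nat -> nat) (a m : nat) := Block {
  bperm : 'S_m;
  bset : forall i : 'I_m, {set 'I_(F (a + i))}
}.

Definition block_ok (F : nat -> nat) (a m : nat) (B : block F a m) : Prop :=
  forall i : 'I_m, #|bset B i| = F (bperm B i).+1.

Definition in_block (F : nat -> nat) (a m : nat) (c : chain F a m) (B : block F a m) : bool :=
  [forall i : 'I_m, c i \in bset B i].

Definition layer_tiling (F : nat -> nat) (a m : nat) : Prop :=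
  exists bs : seq (block F a m),
    (forall i, i < size bs -> block_ok (nth (Block 1 (fun j => set0)) bs i)) /\
    (forall c : chain F a m, count (in_block c) bs = 1).

Definition cobweb_tiling (F : nat -> nat) : Prop :=
  cobweb_admissible F /\
  forall a m, 1 <= a -> 1 <= m -> layer_tiling F a m.

Definition shift_seq (s : nat) (A : nat -> nat) (n : nat) : nat :=
  if n < s then 1 else A (n - s).

(* Main.v *)
Require Import Defs.
From mathcomp Require Import all_boot all_fingroup.
From Stdlib Require Import Lia.
Ltac slia := repeat match goal with
  | H : is_true (_ < _) |- _ => move/ltP: H => H
  | H : is_true (_ <= _) |- _ => move/leP: H => H
  | H : context[subn] |- _ => rewrite -minusE in H
  | H : context[addn] |- _ => rewrite -plusE in H
  end; try apply/leP; rewrite -?minusE -?plusE; lia.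
Set Implicit Arguments. Unset Strict Implicit. Unset Printing Implicit Defensive.

Fixpoint allp T (P : T -> Prop) (s : seq T) : Prop :=
  if s is x :: s' then P x /\ allp P s' else True.

Lemma allp_nth T (P : T -> Prop) d s :
  allp P s <-> (forall i, i < size s -> P (nth d s i)).
Proof.
elim: s => [|x s IH] /=; first by split.
split.
- by case=> Px /IH H [|i] //= /H.
- move=> H; split; first exact: (H 0).
  by apply/IH => i Hi; apply: (H i.+1).
Qed.

Lemma allp_cat T (P : T -> Prop) s1 s2 : allp P s1 -> allp P s2 -> allp P (s1 ++ s2).
Proof. by elim: s1 => //= x s IH [] Hx /IH H /H. Qed.

Lemma allp_flatten T (P : T -> Prop) ss : allp (allp P) ss -> allp P (flatten ss).
Proof. by elim: ss => //= s ss IH [] Hs /IH; apply: allp_cat. Qed.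

Lemma allp_map T U (P : T -> Prop) (Q : U -> Prop) (f : U -> T) s :
  (forall x, Q x -> P (f x)) -> allp Q s -> allp P (map f s).
Proof. by move=> H; elim: s => //= x s IH [] /H ? /IH. Qed.

Lemma allp_all T (P : T -> Prop) s : (forall x, P x) -> allp P s.
Proof. by move=> H; elim: s => //= x s IH; split. Qed.

Lemma tiling0 (A : nat -> nat) a : layer_tiling A a 0.
Proof.
exists [:: @Block A a 0 1 (fun i => set0)]; split.
- by move=> i _; case.
- move=> c /=; rewrite addn0.
  suff -> : in_block c (@Block A a 0 1 (fun i => set0)) by [].
  by apply/forallP; case.
Qed.

Section Ext.
Variables (G A : nat -> nat) (a p m : nat).
Hypothesis H1 : forall k : 'I_m, G (a + (p + k)) = A (a + k).
Hypothesis H2 : forall j, j < p -> G j.+1 = 1.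
Hypothesis H3 : forall k : 'I_m, G (p + k).+1 = A k.+1.

Definition preT := {dffun forall j : 'I_p, 'I_(G (a + lshift m j))}.

Definition pre (c : chain G a (p + m)) : preT := [ffun j => c (lshift m j)].

Definition suf (c : chain G a (p + m)) : chain A a m :=
  fun k => cast_ord (H1 k) (c (rshift p k)).

Definition gsum (T : block A a m) (x : 'I_p + 'I_m) : 'I_p + 'I_m :=
  match x with inl j => inl j | inr k => inr (bperm T k) end.

Lemma gsum_inj T : injective (gsum T).
Proof.
by case=> [j1|k1] [j2|k2] //= [] // /perm_inj ->.
Qed.

Definition fsum T (i : 'I_(p + m)) : 'I_(p + m) := unsplit (gsum T (split i)).

Lemma fsum_inj T : injective (fsum T).
Proof.
move=> x y /(can_inj unsplitK) /gsum_inj /(can_inj splitK); done.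
Qed.

Definition mkblk (T : block A a m) (u : preT) : block G a (p + m) :=
  @Block G a (p + m) (perm (@fsum_inj T))
    (fun i => [set x : 'I_(G (a + i)) | match split i with
       | inl j => val x == val (u j)
       | inr k => [exists y in bset T k, val y == val x] end]).

Lemma in_mk c T u : in_block c (mkblk T u) = (pre c == u) && in_block (suf c) T.
Proof.
apply/forallP/andP.
- move=> H; split.
  + apply/eqP/ffunP => j; rewrite ffunE.
    have := H (lshift m j); rewrite inE (unsplitK (inl j)) => /eqP e.
    exact: val_inj.
  + apply/forallP => k.
    have := H (rshift p k); rewrite inE (unsplitK (inr k)).
    case/existsP => y /andP [yT /eqP e].
    suff -> : suf c k = y by [].
    by apply/val_inj; rewrite /= e.
- case=> [/eqP Hu Hs] i; rewrite inE.
  case: split_ordP => [j ->|k ->]; rewrite ?(unsplitK (inl j)) ?(unsplitK (inr k)).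
  + by rewrite -Hu ffunE.
  + apply/existsP; exists (suf c k); rewrite eqxx andbT.
    exact: (forallP Hs k).
Qed.

Lemma mk_ok T u : block_ok T -> block_ok (mkblk T u).
Proof.
move=> HT i; rewrite /mkblk /= permE /fsum.
case: split_ordP => [j ->|k ->]; rewrite ?(unsplitK (inl j)) ?(unsplitK (inr k)) /=.
- rewrite H2 //.
  have -> : [set x : 'I_(G (a + lshift m j)) | val x == val (u j)] = [set u j].
    by apply/setP => x; rewrite !inE.
  by rewrite cards1.
- rewrite H3 -HT.
  have -> : [set x : 'I_(G (a + rshift p k)) |
      [exists y in bset T k, val y == val x]] =
      (cast_ord (esym (H1 k))) @: bset T k.
    apply/setP => x; rewrite inE; apply/existsP/imsetP.
    + case=> y /andP [yT /eqP e]; exists y => //; apply/val_inj; by rewrite /= e.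
    + by case=> y yT ->; exists y; rewrite yT eqxx.
  apply: card_imset; exact: cast_ord_inj.
Qed.

Lemma ext_tiling : layer_tiling A a m -> layer_tiling G a (p + m).
Proof.
case=> bs [Hok Hc].
exists (flatten [seq [seq mkblk T u | T <- bs] | u <- enum preT]).
split.
- apply/allp_nth; apply: allp_flatten.
  apply: (allp_map (Q := fun _ => True)); last exact: allp_all.
  move=> u _.
  apply: (allp_map (Q := @block_ok A a m)); first by move=> T; apply: mk_ok.
  by apply/allp_nth; exact: Hok.
- move=> c; rewrite count_flatten -map_comp.
  rewrite (eq_map (g := fun u => nat_of_bool (pre c == u))); last first.
    move=> u /=; rewrite count_map.
    rewrite (eq_count (a2 := fun T => (pre c == u) && in_block (suf c) T)); last first.
      by move=> T /=; rewrite in_mk.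
    by case: (pre c == u); rewrite ?Hc //; elim: bs {Hok Hc}.
  rewrite sumn_count.
  rewrite (eq_count (a2 := pred1 (pre c))); last by move=> u /=; rewrite eq_sym.
  by rewrite count_uniq_mem ?enum_uniq // mem_enum.
Qed.
End Ext.


Lemma den_prefix F x y : x <= y -> fnom_den F x %| fnom_den F y.
Proof.
move=> /subnK <-; elim: (y - x) => [|d IH]; first by rewrite add0n.
by rewrite addSn /fnom_den big_ord_recr /= dvdn_mulr.
Qed.

Lemma den_shift A s k : A 0 = 1 ->
  fnom_den (shift_seq s A) k = fnom_den A (k - s).
Proof.
move=> A0; elim: k => [|k IH]; first by rewrite sub0n /fnom_den !big_ord0.
rewrite /fnom_den big_ord_recr /= -/(fnom_den _ k) IH /shift_seq.
case: ltnP => h.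
- have e1 : k.+1 - s = 0 by slia.
  have e2 : k - s = 0 by slia.
  by rewrite muln1 e1 e2.
- case: (ltnP k s) => h2.
  + have e1 : k.+1 - s = 0 by slia.
    have e2 : k - s = 0 by slia.
    by rewrite e1 e2 A0 muln1.
  + have e1 : k.+1 - s = (k - s).+1 by slia.
    by rewrite e1 /fnom_den big_ord_recr.
Qed.

Lemma num_shift A s n k : A 0 = 1 ->
  fnom_num (shift_seq s A) n k = fnom_num A (n - s) (minn k (n - s)).
Proof.
move=> A0; elim: k => [|k IH]; first by rewrite min0n /fnom_num !big_ord0.
rewrite /fnom_num big_ord_recr /= -/(fnom_num _ n k) IH /shift_seq.
case: (ltnP k (n - s)) => h.
- rewrite (minn_idPl h) big_ord_recr /=.
  have h' : (n - k < s) = false by apply/negbTE; rewrite -leqNgt; slia.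
  rewrite h'; congr (_ * A _); slia.
- rewrite (minn_idPr (leqW h)).
  case: ltnP => h2; first by rewrite muln1.
  have -> : n - k - s = 0 by slia.
  by rewrite A0 muln1.
Qed.

Theorem mainTheorem5 (A : nat -> nat) (s : nat) :
  cobweb_tiling A -> A 0 = 1 -> cobweb_tiling (shift_seq s A).
Proof.
move=> [[_ Hadm] Htil] A0; split; first split.
- by rewrite /shift_seq; case: s.
- move=> n k kn; rewrite den_shift // num_shift //.
  have [Hp _] := Hadm (k - s) (k - s) (leqnn _).
  split => //.
  have k'le : minn k (n - s) <= n - s by apply: geq_minr.
  have [_ Hd] := Hadm _ _ k'le.
  apply: dvdn_trans Hd; apply: den_prefix.
  by rewrite leq_min leq_subr leq_sub2r.
- move=> a m a1 m1.
  case: (leqP m s) => ms.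
  + rewrite -[m]addn0; apply: ext_tiling (tiling0 A a).
    * by case.
    * move=> j jm; rewrite /shift_seq; case: ltnP => // h.
      have -> : j.+1 - s = 0 by apply/eqP; rewrite subn_eq0; apply: leq_trans ms.
      by [].
    * by case.
  + rewrite -(subnKC (ltnW ms)); apply: ext_tiling.
    * move=> k; rewrite /shift_seq; case: ltnP => h; first by slia.
      by rewrite addnCA addKn.
    * move=> j js; rewrite /shift_seq; case: ltnP => // h.
      have -> : j.+1 - s = 0 by slia.
      by [].
    * move=> k; rewrite /shift_seq; case: ltnP => h; first by slia.
      by rewrite -addnS addKn.
    * by apply: Htil => //; rewrite subn_gt0.
Qed.
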